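(* Let $A$ be a finite set, $\rho\subseteq A^n$ a key relation, and $\boldsymbol f=(f_1,\dots,f_n)$ a vector-function of arity $m$ (each $f_i:A^m\to A$) which preserves $\rho$. Then $\boldsymbol f$ preserves $\mathrm{Key}(\rho)$.
   Context: A unary vector-function is a tuple $\Psi=(\psi_1,\dots,\psi_n)$ of maps $\psi_i:A\to A$ acting coordinatewise; it preserves $\rho$ if $\Psi(\rho)\subseteq\rho$. $\rho$ is a key relation if there is $\beta\in A^n\setminus\rho$ (a key tuple) such that every $\alpha\in A^n\setminus\rho$ is mapped to $\beta$ by some unary vector-function preserving $\rho$. $\mathrm{Key}(\rho)$ is $\rho$ together with all key tuples for $\rho$. An $m$-ary vector-function $(f_1,\dots,f_n)$ preserves a relation $\tau\subseteq A^n$ if for all $\alpha^1,\dots,\alpha^m\in\tau$ the tuple $(f_1(\alpha^1(1),\dots,\alpha^m(1)),\dots,f_n(\alpha^1(n),\dots,\alpha^m(n)))$ lies in $\tau$. *)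

(* Defs.v *)
From mathcomp Require Import all_boot.
Set Implicit Arguments. Unset Strict Implicit. Unset Printing Implicit Defensive.

Notation tup A n := {ffun 'I_n -> A}.

Definition uvapp (A : finType) (n : nat) (psi : 'I_n -> A -> A) (a : tup A n)
  : tup A n := [ffun i => psi i (a i)].

Definition upreserves (A : finType) (n : nat) (psi : 'I_n -> A -> A)
  (rho : {set tup A n}) : Prop :=
  forall a, a \in rho -> uvapp psi a \in rho.

Definition is_key_tuple (A : finType) (n : nat) (rho : {set tup A n})
  (b : tup A n) : Prop :=
  b \notin rho /\
  forall a, a \notin rho ->
    exists psi : 'I_n -> A -> A, upreserves psi rho /\ uvapp psi a = b.

Definition key_relation (A : finType) (n : nat) (rho : {set tup A n}) : Prop :=
  exists b, is_key_tuple rho b.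

Definition Key (A : finType) (n : nat) (rho : {set tup A n}) : tup A n -> Prop :=
  fun b => b \in rho \/ is_key_tuple rho b.

Definition vapp (A : finType) (n m : nat) (f : 'I_n -> ({ffun 'I_m -> A} -> A))
  (alpha : 'I_m -> tup A n) : tup A n :=
  [ffun i => f i [ffun j => alpha j i]].

Definition vpreserves (A : finType) (n m : nat)
  (f : 'I_n -> ({ffun 'I_m -> A} -> A)) (tau : tup A n -> Prop) : Prop :=
  forall alpha : 'I_m -> tup A n, (forall j, tau (alpha j)) -> tau (vapp f alpha).

(* Main.v *)
Require Import Defs.
From mathcomp Require Import all_boot.
From Stdlib Require Import ClassicalEpsilon FunctionalExtensionality.

Lemma uv_vapp (A : finType) (n m : nat) (f : 'I_n -> ({ffun 'I_m -> A} -> A))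
  (Psi : 'I_m -> 'I_n -> A -> A) (a : {ffun 'I_n -> A}) :
  uvapp (fun i x => f i [ffun j => Psi j i x]) a
  = vapp f (fun j => uvapp (Psi j) a).
Proof.
apply/ffunP => i; rewrite !ffunE; congr (f i _); apply/ffunP => j.
by rewrite !ffunE.
Qed.

Lemma uv_comp (A : finType) (n : nat) (p q : 'I_n -> A -> A) (a : {ffun 'I_n -> A}) :
  uvapp (fun i x => p i (q i x)) a = uvapp p (uvapp q a).
Proof. by apply/ffunP => i; rewrite !ffunE. Qed.

Theorem mainTheorem19 (A : finType) (n m : nat) (rho : {set {ffun 'I_n -> A}})
  (f : 'I_n -> ({ffun 'I_m -> A} -> A)) :
  key_relation rho ->
  vpreserves f (fun a => a \in rho) ->
  vpreserves f (Key rho).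
Proof.
move=> [b [bnr bkey]] fpres alpha Halpha.
have H : forall j, exists psi : 'I_n -> A -> A,
    upreserves psi rho /\ uvapp psi b = alpha j.
  move=> j; case: (Halpha j) => [ain | [anr akey]].
    exists (fun i _ => alpha j i); split.
      by move=> a _; have -> : uvapp (fun i _ => alpha j i) a = alpha j
        by apply/ffunP => i; rewrite ffunE.
    by apply/ffunP => i; rewrite ffunE.
  by apply: akey.
pose Psi := fun j => proj1_sig (constructive_indefinite_description _ (H j)).
have HPsi : forall j, upreserves (Psi j) rho /\ uvapp (Psi j) b = alpha j.
  by move=> j; rewrite /Psi; case: constructive_indefinite_description.
pose Phi := fun i x => f i [ffun j => Psi j i x].
have Phipres : upreserves Phi rho.
  move=> a ain; rewrite /Phi uv_vapp; apply: fpres => j.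
  by apply: (proj1 (HPsi j)).
have Phib : uvapp Phi b = vapp f alpha.
  rewrite /Phi uv_vapp; congr (vapp f _).
  apply: FunctionalExtensionality.functional_extensionality => j.
  exact: (proj2 (HPsi j)).
case: (boolP (vapp f alpha \in rho)) => [gin | gnr]; first by left.
right; split => // a anr.
have [q [qpres qa]] := bkey a anr.
exists (fun i x => Phi i (q i x)); split.
  by move=> c cin; rewrite uv_comp; apply: Phipres; apply: qpres.
by rewrite uv_comp qa.
Qed.
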